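(* In the standing setting below, let $X_i=(x_i,u_i)\in\mathbb{X}\times\mathbb{R}$ for $i=0,1$. Then for every $x\in\mathbb{X}$, $$F_{X_0X_1}(x)=\sup\Big(\bigcup_{i=0,1}\{-c(x,y)+c(x_i,y)+u_i:\ y\in\mathbb{Y},\ -c(x_{i+1},y)+c(x_i,y)+u_i\le u_{i+1}\}\Big),$$ where indices are taken modulo 2 (so $x_{1+1}=x_0$, $u_{1+1}=u_0$).
   Context: Standing setting: $\mathbb{X},\mathbb{Y}\subset\mathbb{R}^n$ are compact with non-empty interior; $c:\mathbb{X}\times\mathbb{Y}\to\mathbb{R}$ has continuous $D_xc$, $D_yc$, and continuous mixed second derivatives with $D^2_{xy}c=(D^2_{yx}c)^T$; for each $x$ the map $y\mapsto -D_xc(x,y)$ is injective on $\mathbb{Y}$ and for each $y$ the map $x\mapsto -D_yc(x,y)$ is injective on $\mathbb{X}$; $D^2_{xy}c(x,y)$ is invertible everywhere; for every $y$ the set $\{-D_yc(x,y):x\in\mathbb{X}\}$ is convex and for every $x$ the set $\{-D_xc(x,y):y\in\mathbb{Y}\}$ is convex. $c$-chord: for $X_i=(x_i,u_i)\in\mathbb{X}\times\mathbb{R}$, $F_{X_0X_1}(x)=\sup\{-c(x,y)+h: y\in\mathbb{Y},h\in\mathbb{R},-c(x_i,y)+h\le u_i, i=0,1\}$. *)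

(* Defs.v *)
(* R^n is modelled as row vectors 'rV[R]_n. *)
From HB Require Import structures.
From mathcomp Require Import all_boot all_order all_algebra.
From mathcomp Require Import all_classical all_reals all_analysis.
Set Implicit Arguments.
Unset Strict Implicit.
Unset Printing Implicit Defensive.
Import Order.TTheory GRing.Theory Num.Theory.
Import numFieldNormedType.Exports.
Local Open Scope classical_set_scope.
Local Open Scope ring_scope.

Section Defs.
Variables (R : realType) (n : nat).
Implicit Types (c : 'rV[R]_n -> 'rV[R]_n -> R) (x y : 'rV[R]_n).

Definition ebasis (i : 'I_n) : 'rV[R]_n := delta_mx 0 i.

Definition gradx c x y : 'rV[R]_n :=
  \row_i 'D_(ebasis i) (fun x' => c x' y) x.
Definition grady c x y : 'rV[R]_n :=
  \row_j 'D_(ebasis j) (fun y' => c x y') y.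

Definition Dxy c x y : 'M[R]_n :=
  \matrix_(i, j) 'D_(ebasis j) (fun y' => 'D_(ebasis i) (fun x' => c x' y') x) y.
Definition Dyx c x y : 'M[R]_n :=
  \matrix_(j, i) 'D_(ebasis i) (fun x' => 'D_(ebasis j) (fun y' => c x' y') y) x.

Definition convex_set_rV (S : set 'rV[R]_n) : Prop :=
  forall a b, S a -> S b -> forall t : R, 0 <= t <= 1 ->
    S (t *: a + (1 - t) *: b).

Definition standing_setting (X Y : set 'rV[R]_n) c : Prop :=
     compact X /\ compact Y /\ interior X !=set0 /\ interior Y !=set0 /\
   (forall x y, X x -> Y y ->
      differentiable (fun x' => c x' y) x /\ differentiable (fun y' => c x y') y) /\
   {within X `*` Y, continuous (fun p => gradx c p.1 p.2)} /\
   {within X `*` Y, continuous (fun p => grady c p.1 p.2)} /\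
   (forall x y, X x -> Y y -> forall i j : 'I_n,
      derivable (fun y' => 'D_(ebasis i) (fun x' => c x' y') x) y (ebasis j) /\
      derivable (fun x' => 'D_(ebasis j) (fun y' => c x' y') y) x (ebasis i)) /\
   {within X `*` Y, continuous (fun p => Dxy c p.1 p.2)} /\
   {within X `*` Y, continuous (fun p => Dyx c p.1 p.2)} /\
   (forall x y, X x -> Y y -> Dxy c x y = (Dyx c x y)^T) /\
   (forall x, X x -> {in Y &, injective (fun y => - gradx c x y)}) /\
   (forall y, Y y -> {in X &, injective (fun x => - grady c x y)}) /\
   (forall x y, X x -> Y y -> Dxy c x y \in unitmx) /\
   (forall y, Y y -> convex_set_rV [set - grady c x y | x in X]) /\
   (forall x, X x -> convex_set_rV [set - gradx c x y | y in Y]).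

Definition cchord (Y : set 'rV[R]_n) c (x0 : 'rV[R]_n) (u0 : R)
    (x1 : 'rV[R]_n) (u1 : R) (x : 'rV[R]_n) : \bar R :=
  ereal_sup [set r : \bar R | exists (y : 'rV[R]_n) (h : R),
     [/\ Y y, - c x0 y + h <= u0, - c x1 y + h <= u1 & r = (- c x y + h)%:E]].
End Defs.

(* Main.v *)
Require Import Defs.
From HB Require Import structures.
From mathcomp Require Import all_boot all_order all_algebra.
From mathcomp Require Import all_classical all_reals all_analysis.
From mathcomp Require Import lra.
Import Order.TTheory GRing.Theory Num.Theory.
Import numFieldNormedType.Exports.
Local Open Scope classical_set_scope.
Local Open Scope ring_scope.

Theorem lemma3p3 (R : realType) (n : nat) (X Y : set 'rV[R]_n)
    (c : 'rV[R]_n -> 'rV[R]_n -> R)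
    (x0 x1 : 'rV[R]_n) (u0 u1 : R) :
  standing_setting X Y c -> X x0 -> X x1 ->
  forall x, X x ->
  cchord Y c x0 u0 x1 u1 x =
  ereal_sup ([set ((- c x y + c x0 y + u0)%R)%:E | y in
                [set y | Y y /\ - c x1 y + c x0 y + u0 <= u1]] `|`
             [set ((- c x y + c x1 y + u1)%R)%:E | y in
                [set y | Y y /\ - c x0 y + c x1 y + u1 <= u0]]).
Proof.
move=> _ _ _ x _; rewrite /cchord; apply/eqP; rewrite eq_le; apply/andP; split.
- apply: ge_ereal_sup => r [y [h [Yy H0 H1 ->]]].
  have [le|le] := lerP (c x0 y + u0) (c x1 y + u1).
  + apply: (@le_trans _ _ ((- c x y + c x0 y + u0)%R)%:E).
      rewrite lee_fin; lra.
    apply: ereal_sup_ubound; left; exists y => //; split => //; lra.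
  + apply: (@le_trans _ _ ((- c x y + c x1 y + u1)%R)%:E).
      rewrite lee_fin; lra.
    apply: ereal_sup_ubound; right; exists y => //; split => //; lra.
- apply: ereal_sup_le => r [] [y [Yy H] <-].
  + exists y, (c x0 y + u0); split => //; first lra; first lra.
    by rewrite addrA.
  + exists y, (c x1 y + u1); split => //; first lra; first lra.
    by rewrite addrA.
Qed.
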